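(* Let $L\ge 2$, $\lambda>0$, $d_{\min}>0$, let ${\bf q}_r\in\mathbb{R}^3$ and ${\cal C}\subseteq\mathbb{R}^3$, and let ${\bm\kappa}_k,{\bm\kappa}_{k'}\in\mathbb{R}^3$ be unit vectors with ${\bm\kappa}_k\neq{\bm\kappa}_{k'}$. Consider the problem $$\min_{{\bf q}_1,\dots,{\bf q}_L\in\mathbb{R}^3}\ \xi({\bf q}_1,\dots,{\bf q}_L):=\frac{1}{L^2}\Big|\sum_{l=1}^L e^{\,\mathrm{j}\frac{2\pi}{\lambda}({\bm\kappa}_k-{\bm\kappa}_{k'})^T{\bf q}_l}\Big|^2$$ subject to ${\bf q}_r+{\bf q}_l\in{\cal C}$ for all $l$ and $\|{\bf q}_l-{\bf q}_{l'}\|\ge d_{\min}$ for all $l\neq l'$. Let $\nu_{\min}=\big\lceil L d_{\min}\|{\bm\kappa}_k-{\bm\kappa}_{k'}\|/\lambda-1\big\rceil$ and $$\varsigma^\star=\begin{cases}\nu_{\min}/L, & \text{if } \mathrm{mod}(\nu_{\min}+1,L)\neq 0,\\ (\nu_{\min}+1)/L, & \text{otherwise.}\end{cases}$$ For an arbitrary ${\bf q}_1\in\mathbb{R}^3$ define $${\bf q}_l={\bf q}_1+(l-1)\frac{(\varsigma^\star+1/L)\lambda}{\|{\bm\kappa}_k-{\bm\kappa}_{k'}\|^2}({\bm\kappa}_k-{\bm\kappa}_{k'}),\quad l=1,\dots,L.$$ Then $\xi({\bf q}_1,\dots,{\bf q}_L)=0$ and $\|{\bf q}_l-{\bf q}_{l'}\|\ge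 d_{\min}$ for all $l\neq l'$. Consequently, whenever ${\bf q}_1$ is such that ${\bf q}_r+{\bf q}_l\in{\cal C}$ for all $l$, these positions form an optimal solution of the problem, achieving objective value zero.
   Context: $\mathrm{j}$ denotes the imaginary unit; $\lceil\cdot\rceil$ is the ceiling function; $\mathrm{mod}(a,b)$ is the remainder of integer $a$ divided by $b$. The quantity $\xi$ is the squared correlation coefficient between the far-field (uniform plane wave) channels of two users with propagation directions ${\bm\kappa}_k,{\bm\kappa}_{k'}$ received by $L$ single-antenna UAVs at positions ${\bf q}_l$ (relative to a reference point ${\bf q}_r$), ${\cal C}$ is the UAV movable region and $d_{\min}$ the minimum safe inter-UAV distance. *)

(* Defs.v *)
From Stdlib Require Import Reals Lra Lia ZArith.
From Coquelicot Require Import Coquelicot.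
Open Scope R_scope.

Definition vec3 : Type := (R * R * R)%type.
Definition vadd (u v : vec3) : vec3 :=
  let '(a1, a2, a3) := u in let '(b1, b2, b3) := v in (a1 + b1, a2 + b2, a3 + b3).
Definition vsub (u v : vec3) : vec3 :=
  let '(a1, a2, a3) := u in let '(b1, b2, b3) := v in (a1 - b1, a2 - b2, a3 - b3).
Definition vscale (c : R) (u : vec3) : vec3 :=
  let '(a1, a2, a3) := u in (c * a1, c * a2, c * a3).
Definition vdot (u v : vec3) : R :=
  let '(a1, a2, a3) := u in let '(b1, b2, b3) := v in a1 * b1 + a2 * b2 + a3 * b3.
Definition vnorm (u : vec3) : R := sqrt (vdot u u).

Definition Rceil (x : R) : Z := (- Int_part (- x))%Z.

Definition cexpj (theta : R) : C := (cos theta, sin theta).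

(* xi(q_1,...,q_L) = 1/L^2 | sum_{l=1}^L e^{j (2 pi / lam) (kk - kk')^T q_l} |^2 ;
   positions are indexed by l = 1..L. *)
Definition xi (L : nat) (lam : R) (kk kk' : vec3) (q : nat -> vec3) : R :=
  / (INR L) ^ 2 *
  (Cmod (sum_n (fun i => cexpj (2 * PI / lam * vdot (vsub kk kk') (q (S i)))) (L - 1)%nat)) ^ 2.

Definition feasible (L : nat) (dmin : R) (qr : vec3) (Creg : vec3 -> Prop)
  (q : nat -> vec3) : Prop :=
  (forall l, (1 <= l <= L)%nat -> Creg (vadd qr (q l))) /\
  (forall l l', (1 <= l <= L)%nat -> (1 <= l' <= L)%nat -> l <> l' ->
     dmin <= vnorm (vsub (q l) (q l'))).

Definition nu_min (L : nat) (lam dmin : R) (kk kk' : vec3) : Z :=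
  Rceil (INR L * dmin * vnorm (vsub kk kk') / lam - 1).

Definition varsigma_star (L : nat) (lam dmin : R) (kk kk' : vec3) : R :=
  let nu := nu_min L lam dmin kk kk' in
  if negb (Z.eqb (Z.modulo (nu + 1) (Z.of_nat L)) 0)
  then IZR nu / INR L
  else IZR (nu + 1) / INR L.

Definition q_star (L : nat) (lam dmin : R) (kk kk' : vec3) (q1 : vec3) (l : nat) : vec3 :=
  vadd q1 (vscale (INR (l - 1) * ((varsigma_star L lam dmin kk kk' + / INR L) * lam
                     / (vnorm (vsub kk kk')) ^ 2)) (vsub kk kk')).

(* Main.v *)
Require Import Defs.
From Stdlib Require Import Reals Lra Lia ZArith.
From Coquelicot Require Import Coquelicot.
Open Scope R_scope.
Lemma cexpj_mult x y : Cmult (cexpj x) (cexpj y) = cexpj (x+y).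
Proof. unfold Cmult, cexpj; simpl. rewrite cos_plus, sin_plus. f_equal; ring. Qed.
Lemma geo (a t : R) (n : nat) :
  Cmult (sum_n (fun i => cexpj (a + INR i * t)) n) (Cminus (cexpj t) 1)
  = Cminus (cexpj (a + INR (S n) * t)) (cexpj a).
Proof.
  induction n.
  - rewrite sum_O. change (INR 0) with 0. change (INR 1) with 1.
    replace (a + 0 * t) with a by ring. replace (a + 1 * t) with (a + t) by ring.
    rewrite <- cexpj_mult.
    destruct (cexpj a) as [p1 p2]; destruct (cexpj t) as [r1 r2].
    unfold Cminus, Cplus, Copp, Cmult; simpl. f_equal; ring.
  - rewrite sum_Sn. change plus with Cplus. cbv beta. rewrite Cmult_plus_distr_r, IHn.
    replace (a + INR (S (S n)) * t) with (a + INR (S n) * t + t)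
      by (rewrite (S_INR (S n)); ring).
    rewrite <- (cexpj_mult (a + INR (S n) * t) t).
    destruct (cexpj (a + INR (S n) * t)) as [p1 p2]; destruct (cexpj t) as [r1 r2];
    destruct (cexpj a) as [s1 s2].
    unfold Cminus, Cplus, Copp, Cmult; simpl. f_equal; ring.
Qed.
Lemma Ceq_mult_0 (s w : C) : Cmult s w = 0 -> w <> 0 -> s = 0.
Proof.
  intros H Hw. rewrite <- (Cmult_1_r s), <- (Cinv_r w Hw), Cmult_assoc, H.
  apply Cmult_0_l.
Qed.
Lemma sum_zero (a : R) (M : Z) (L : nat) :
  (1 <= L)%nat -> (0 < M)%Z -> (M mod Z.of_nat L <> 0)%Z ->
  sum_n (fun i => cexpj (a + INR i * (2 * PI * IZR M / INR L))) (L - 1) = RtoC 0.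
Proof.
  intros HL HM Hmod.
  assert (HLr : INR L <> 0) by (apply not_0_INR; lia).
  set (t := 2 * PI * IZR M / INR L).
  apply Ceq_mult_0 with (w := Cminus (cexpj t) 1).
  - rewrite geo. replace (S (L - 1)) with L by lia.
    replace (a + INR L * t) with (a + 2 * INR (Z.to_nat M) * PI).
    2:{ unfold t. rewrite INR_IZR_INZ, Z2Nat.id by lia. field. auto. }
    unfold cexpj. rewrite cos_period, sin_period.
    unfold Cminus, Cplus, Copp; unfold RtoC; simpl. f_equal; ring.
  - intro H. unfold Cminus, Cplus, Copp, cexpj in H. simpl in H.
    injection H; intros Hs Hc.
    assert (Hc2 : cos t = 1) by lra.
    assert (Hs2 : sin (t/2) = 0).
    { replace t with (2 * (t/2)) in Hc2 by field. rewrite cos_2a_sin in Hc2.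
      nra. }
    destruct (sin_eq_0_0 _ Hs2) as [k Hk].
    apply Hmod.
    assert (E : IZR M = IZR k * INR L).
    { unfold t in Hk. assert (HP := PI_RGT_0).
      apply (Rmult_eq_reg_l (PI / INR L)). 2:{ apply Rmult_integral_contrapositive_currified; [lra | apply Rinv_neq_0_compat; auto]. }
      replace (PI / INR L * IZR M) with (2 * PI * IZR M / INR L / 2) by (field; auto).
      rewrite Hk. field. auto. }
    rewrite INR_IZR_INZ, <- mult_IZR in E. apply eq_IZR in E. rewrite E.
    apply Z.mod_mul. lia.
Qed.
Lemma vdot_add_scale (d q1 : vec3) (s : R) :
  vdot d (vadd q1 (vscale s d)) = vdot d q1 + s * vdot d d.
Proof. destruct d as [[d1 d2] d3]; destruct q1 as [[x1 x2] x3]; simpl; ring. Qed.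
Lemma vsub_add_scale (d q1 : vec3) (s1 s2 : R) :
  vsub (vadd q1 (vscale s1 d)) (vadd q1 (vscale s2 d)) = vscale (s1 - s2) d.
Proof. destruct d as [[d1 d2] d3]; destruct q1 as [[x1 x2] x3]; simpl; f_equal; [f_equal|]; ring. Qed.
Lemma vnorm_scale (s : R) (d : vec3) : vnorm (vscale s d) = Rabs s * vnorm d.
Proof.
  unfold vnorm. replace (vdot (vscale s d) (vscale s d)) with (Rsqr s * vdot d d).
  2:{ destruct d as [[d1 d2] d3]; simpl; unfold Rsqr; ring. }
  rewrite sqrt_mult. rewrite sqrt_Rsqr_abs. auto. apply Rle_0_sqr.
  destruct d as [[d1 d2] d3]; simpl; nra.
Qed.
Lemma vdot_pos (kk kk' : vec3) : kk <> kk' -> 0 < vdot (vsub kk kk') (vsub kk kk').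
Proof.
  intro H. destruct kk as [[a1 a2] a3]; destruct kk' as [[b1 b2] b3]; simpl.
  destruct (Req_dec a1 b1); destruct (Req_dec a2 b2); destruct (Req_dec a3 b3);
  try (subst; exfalso; apply H; reflexivity); nra.
Qed.
Lemma M_exists (L : nat) (lam dmin : R) (kk kk' : vec3) :
  (2 <= L)%nat ->
  exists M : Z, varsigma_star L lam dmin kk kk' + / INR L = IZR M / INR L /\
    (M mod Z.of_nat L <> 0)%Z /\
    INR L * dmin * vnorm (vsub kk kk') / lam <= IZR M.
Proof.
  intro HL. assert (HLr : INR L <> 0) by (apply not_0_INR; lia).
  set (x := INR L * dmin * vnorm (vsub kk kk') / lam).
  assert (Hnu : x - 1 <= IZR (nu_min L lam dmin kk kk')).
  { unfold nu_min, Rceil. fold x. rewrite opp_IZR.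
    destruct (base_Int_part (- (x - 1))). lra. }
  unfold varsigma_star. set (nu := nu_min L lam dmin kk kk') in *.
  destruct (Z.eqb ((nu + 1) mod Z.of_nat L) 0) eqn:E; simpl.
  - exists (nu + 2)%Z. split; [|split].
    + rewrite !plus_IZR. field. auto.
    + apply Z.eqb_eq in E.
      replace (nu + 2)%Z with (nu + 1 + 1)%Z by ring.
      rewrite <- Z.add_mod_idemp_l by lia. rewrite E. simpl.
      rewrite Z.mod_small; lia.
    + rewrite plus_IZR. lra.
  - exists (nu + 1)%Z. split; [|split].
    + rewrite plus_IZR. field. auto.
    + apply Z.eqb_neq in E. auto.
    + rewrite plus_IZR. lra.
Qed.
Theorem theorem1 (L : nat) (lam dmin : R) (qr : vec3) (Creg : vec3 -> Prop)
  (kk kk' : vec3) :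
  (2 <= L)%nat -> 0 < lam -> 0 < dmin ->
  vnorm kk = 1 -> vnorm kk' = 1 -> kk <> kk' ->
  forall q1 : vec3,
    let q := q_star L lam dmin kk kk' q1 in
    xi L lam kk kk' q = 0 /\
    (forall l l', (1 <= l <= L)%nat -> (1 <= l' <= L)%nat -> l <> l' ->
       dmin <= vnorm (vsub (q l) (q l'))) /\
    ((forall l, (1 <= l <= L)%nat -> Creg (vadd qr (q l))) ->
       feasible L dmin qr Creg q /\
       (forall p : nat -> vec3, feasible L dmin qr Creg p ->
          xi L lam kk kk' q <= xi L lam kk kk' p)).
Proof.
  intros HL Hlam Hdmin _ _ Hne q1 q.
  assert (HLr : INR L <> 0) by (apply not_0_INR; lia).
  assert (HLp : 0 < INR L) by (apply lt_0_INR; lia).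
  destruct (M_exists L lam dmin kk kk' HL) as [M [HMe [HMmod HMge]]].
  set (d := vsub kk kk') in *.
  assert (Hdd : 0 < vdot d d) by (apply vdot_pos; auto).
  assert (HD2 : vnorm d ^ 2 = vdot d d).
  { unfold vnorm. rewrite <- Rsqr_pow2. apply Rsqr_sqrt. lra. }
  assert (HD : 0 < vnorm d) by (apply sqrt_lt_R0; auto).
  assert (HMpos : 0 < IZR M).
  { eapply Rlt_le_trans; [|exact HMge]. unfold Rdiv.
    repeat apply Rmult_lt_0_compat; auto. apply Rinv_0_lt_compat; auto. }
  assert (HMz : (0 < M)%Z) by (apply lt_IZR; auto).
  set (K := (IZR M / INR L) * lam / vnorm d ^ 2).
  assert (Hq : forall l, q l = vadd q1 (vscale (INR (l - 1) * K) d)).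
  { intro l. unfold q, q_star. fold d. rewrite HMe. reflexivity. }
  assert (Hxi : xi L lam kk kk' q = 0).
  { unfold xi. fold d.
    rewrite (sum_n_ext _ (fun i => cexpj (2 * PI / lam * vdot d q1 + INR i * (2 * PI * IZR M / INR L)))).
    - rewrite sum_zero by (auto; lia). rewrite Cmod_0. ring.
    - intro i. rewrite Hq. replace (S i - 1)%nat with i by lia.
      rewrite vdot_add_scale. f_equal. unfold K. rewrite HD2. field.
      repeat split; lra. }
  assert (Hdist : forall l l', (1 <= l <= L)%nat -> (1 <= l' <= L)%nat -> l <> l' ->
       dmin <= vnorm (vsub (q l) (q l'))).
  { intros l l' Hl Hl' Hll. rewrite !Hq, vsub_add_scale, vnorm_scale.
    replace (INR (l - 1) * K - INR (l' - 1) * K) with ((INR (l - 1) - INR (l' - 1)) * K) by ring.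
    assert (HK : 0 < K).
    { unfold K. rewrite HD2. unfold Rdiv.
      repeat apply Rmult_lt_0_compat; auto; apply Rinv_0_lt_compat; auto. }
    assert (H1 : 1 <= Rabs (INR (l - 1) - INR (l' - 1))).
    { destruct (Nat.lt_gt_cases l l') as [[Hlt|Hgt] _]; auto.
      - assert (INR (l - 1) + 1 <= INR (l' - 1)).
        { rewrite <- S_INR. apply le_INR. lia. }
        rewrite Rabs_left1; lra.
      - assert (INR (l' - 1) + 1 <= INR (l - 1)).
        { rewrite <- S_INR. apply le_INR. lia. }
        rewrite Rabs_right; lra. }
    rewrite Rabs_mult, (Rabs_right K) by lra.
    apply Rle_trans with (K * vnorm d).
    - unfold K. rewrite HD2.
      replace dmin with ((INR L * dmin * vnorm d / lam) * (lam / (INR L * vnorm d))) by (field; lra).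
      replace (IZR M / INR L * lam / vdot d d * vnorm d) with (IZR M * (lam / (INR L * vnorm d))).
      2:{ rewrite <- HD2. field. lra. }
      apply Rmult_le_compat_r; auto. apply Rlt_le. unfold Rdiv.
      apply Rmult_lt_0_compat; auto. apply Rinv_0_lt_compat. nra.
    - rewrite Rmult_assoc. rewrite <- (Rmult_1_l (K * vnorm d)) at 1.
      apply Rmult_le_compat_r; nra. }
  split; [exact Hxi|]. split; [exact Hdist|].
  intros HC. split; [split; auto|].
  intros p _. rewrite Hxi. unfold xi. apply Rmult_le_pos.
  - apply Rlt_le, Rinv_0_lt_compat, pow_lt; auto.
  - apply pow2_ge_0.
Qed.
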